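(* Let $B$ be any group and $p\ge 2$ an integer. Suppose $w\in (B\wr C_p)'$ is given by the wreath recursion $$w=(r_1,r_2,\dots,r_{p-1},\; r_1^{-1}\cdots r_{p-1}^{-1}[f,g])$$ with $r_1,\dots,r_{p-1},f,g\in B$. Define elements of $B$ by $a_{1,i}=e$ for $1\le i\le p-1$; $a_{2,1}=(f^{-1})^{r_1^{-1}\cdots r_{p-1}^{-1}}$; $a_{2,i}=r_{i-1}a_{2,i-1}$ for $2\le i\le p$; $a_{1,p}=g^{a_{2,p}^{-1}}$. Then $$w=[(a_{1,1},\dots,a_{1,p})\sigma,\ (a_{2,1},\dots,a_{2,p})].$$
   Context: $C_p=\langle\sigma\rangle$ with $\sigma=(1,2,\dots,p)$ acting on $\{1,\dots,p\}$. Elements of $B\wr C_p=B^p\rtimes C_p$ are written $(b_1,\dots,b_p)\tau$, with multiplication $(g_1,\dots,g_p)\tau\cdot(h_1,\dots,h_p)\rho=(g_1h_{\tau(1)},\dots,g_ph_{\tau(p)})\tau\rho$; $(b_1,\dots,b_p)$ denotes an element with trivial $C_p$-part. Conventions: $[a,b]=aba^{-1}b^{-1}$ and $a^b=bab^{-1}$. *)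

(* Defs.v *)
From mathcomp Require Import all_boot all_algebra.
Set Implicit Arguments. Unset Strict Implicit. Unset Printing Implicit Defensive.
Import GRing.Theory.

Record Grp := {
  car :> Type;
  gmul : car -> car -> car;
  ginv : car -> car;
  gone : car;
  gmulA : forall x y z, gmul x (gmul y z) = gmul (gmul x y) z;
  gmul1 : forall x, gmul gone x = x;
  gmulV : forall x, gmul (ginv x) x = gone }.

Definition gcomm (B : Grp) (a b : B) : B :=
  gmul (gmul (gmul a b) (ginv a)) (ginv b).
Definition gconj (B : Grp) (a b : B) : B := gmul (gmul b a) (ginv b).

(* Wreath product B wr C_p, p >= 2.  Positions 1..p are encoded by 'Z_p
   (position j+1 <-> j), sigma = (1,2,...,p) acts as i |-> i + 1, and the
   element sigma^k of C_p is encoded by k : 'Z_p, acting as i |-> i + k.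
   An element (b_1,...,b_p) tau is the pair (b, tau). *)
Definition wr (B : Grp) (p : nat) := ({ffun 'Z_p -> B} * 'Z_p)%type.

Definition wmul (B : Grp) (p : nat) (x y : wr B p) : wr B p :=
  ([ffun i => gmul (x.1 i) (y.1 (i + x.2)%R)], (x.2 + y.2)%R).

Definition winv (B : Grp) (p : nat) (x : wr B p) : wr B p :=
  ([ffun j => ginv (x.1 (j - x.2)%R)], (- x.2)%R).

Definition wcomm (B : Grp) (p : nat) (x y : wr B p) : wr B p :=
  wmul (wmul (wmul x y) (winv x)) (winv y).

Fixpoint prodinv (B : Grp) (r : nat -> B) (m : nat) : B :=
  match m with
  | 0 => gone B
  | m'.+1 => gmul (prodinv r m') (ginv (r m'.+1))
  end.

(* a2aux k = a_{2,k+1}:  a_{2,1} = (f^{-1})^{r_1^{-1}...r_{p-1}^{-1}},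
   a_{2,i} = r_{i-1} a_{2,i-1} *)
Fixpoint a2aux (B : Grp) (p : nat) (r : nat -> B) (f : B) (k : nat) : B :=
  match k with
  | 0 => gconj (ginv f) (prodinv r p.-1)
  | k'.+1 => gmul (r k'.+1) (a2aux p r f k')
  end.
Definition a2 (B : Grp) (p : nat) (r : nat -> B) (f : B) (i : nat) : B :=
  a2aux p r f i.-1.

Definition a1p (B : Grp) (p : nat) (r : nat -> B) (f g : B) : B :=
  gconj g (ginv (a2 p r f p)).

(* Main.v *)
Require Import Defs.
From mathcomp Require Import all_boot all_algebra.
Import GRing.Theory.

Section G.
Variable B : Grp.
Local Notation "x * y" := (gmul x y).
Local Notation "x ^-1" := (ginv x).
Local Notation e := (gone B).
Lemma mulV1 (x : B) : x * x^-1 = e.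
Proof.
rewrite -[x * x^-1]gmul1 -(gmulV (x^-1)) -gmulA (gmulA (x^-1) x) gmulV gmul1 gmulV //.
Qed.
Lemma mul1r (x : B) : x * e = x.
Proof. by rewrite -(gmulV x) gmulA mulV1 gmul1. Qed.
Lemma invU (a b : B) : a * b = e -> a^-1 = b.
Proof. by move=> h; rewrite -[a^-1]mul1r -h gmulA gmulV gmul1. Qed.
Lemma invM (x y : B) : (x * y)^-1 = y^-1 * x^-1.
Proof.
apply: invU; rewrite gmulA -(gmulA x) mulV1 mul1r mulV1 //.
Qed.
Lemma invK (x : B) : x^-1^-1 = x.
Proof. by apply: invU; rewrite gmulV. Qed.
End G.

Lemma a2auxE (B : Grp) p r f k :
  @a2aux B p r f k = gmul (ginv (prodinv r k)) (a2aux p r f 0).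
Proof.
elim: k => [|k IH] /=; first by rewrite (@invU B _ _ (gmul1 (gone B))) gmul1.
by rewrite IH invM invK gmulA.
Qed.

Theorem mainTheorem3 (B : Grp) (p : nat) (hp : 2 <= p)
  (r : nat -> B) (f g : B) :
  let w : wr B p :=
    ([ffun j : 'Z_p => if (j : nat) < p.-1 then r (j : nat).+1
                       else gmul (prodinv r p.-1) (gcomm f g)], 0%R) in
  let x : wr B p :=
    ([ffun j : 'Z_p => if (j : nat) < p.-1 then gone B else a1p p r f g], 1%R) in
  let y : wr B p := ([ffun j : 'Z_p => a2 p r f (j : nat).+1], 0%R) in
  w = wcomm x y.
Proof.
case: p hp => [|[|n]] // _ /=.
rewrite /wcomm /wmul /winv /=.
congr pair; last by rewrite addr0 addrN oppr0 addr0.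
apply/ffunP => j; rewrite !ffunE !addr0 !subr0 addrK.
rewrite subrr addr0.
have Hv : forall k : 'Z_(n.+2), nat_of_ord (k + 1)%R = (k.+1 %% n.+2)%N.
  by move=> k /=; rewrite (modn_small (m:=1)) // addn1.
rewrite Hv /a2 /=.
case: ltnP => hjn.
  rewrite modn_small ?ltnS //= .
  rewrite (@invU B _ _ (gmul1 (gone B))) mul1r gmul1 -gmulA mulV1 mul1r //.
have hj : nat_of_ord j = n.+1.
  by apply/eqP; rewrite eqn_leq hjn andbT; exact: (ltn_ord j).
rewrite hj modnn /a1p /a2 /=.
have E : gmul (r n.+1) (a2aux n.+2 r f n) =
   gmul (ginv f) (ginv (gmul (prodinv r n) (ginv (r n.+1)))).
  change (a2aux n.+2 r f n.+1 = gmul (ginv f) (ginv (prodinv r n.+1))).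
  rewrite a2auxE /= /gconj !gmulA.
  by rewrite -(gmulA _ (prodinv r n)) gmulV gmul1.
rewrite E.
move: (gmul (prodinv r n) (ginv (r n.+1))) => P.
rewrite /gconj /gcomm !invM !invK !gmulA.
have K1 : forall a b : B, gmul (gmul a b) (ginv b) = a.
  by move=> a b; rewrite -gmulA mulV1 mul1r.
have K2 : forall a b : B, gmul (gmul a (ginv b)) b = a.
  by move=> a b; rewrite -gmulA gmulV mul1r.
by rewrite ?K1 ?K2 ?K1 ?K2 ?K1 ?K2 ?K1 ?K2 ?K1 ?K2 ?K1 ?K2.
Qed.
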